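(* Causal graph dynamics are not necessarily monotonic: there exist sets $\Sigma,\Delta$, a finite set $\pi$ and a causal graph dynamics $F:\mathcal{G}_{\Sigma,\Delta,\pi}\to\mathcal{G}_{\Sigma,\Delta,\pi}$ and graphs $G\subseteq H$ with $F(G)\not\subseteq F(H)$.
   Context: Fix an uncountably infinite set $\mathcal{V}$ of vertex names. For sets $\Sigma,\Delta$ and a finite port set $\pi$, a graph $G$ consists of a countable $V(G)\subset\mathcal{V}$, a set $E(G)$ of pairwise disjoint two-element subsets of $V(G)\times\pi$, and partial labelings $\sigma(G):V(G)\rightharpoonup\Sigma$, $\delta(G):E(G)\rightharpoonup\Delta$; $\mathcal{G}_{\Sigma,\Delta,\pi}$ is the set of graphs. $G\subseteq H$ means componentwise inclusion of $V,E,\sigma,\delta$ (partial functions as sets of pairs). Graphs are consistent if their edge sets are jointly pairwise disjoint and labelings agree on common domains; union/intersection componentwise; $\varnothing$ empty graph. The disk $G^r_c=(H,c)$: $V(H)=B_G(c,r+1)$ (shortest-path ball), $E(H)$ the edges of $G$ with an endpoint in $B_G(c,r)$, $\sigma(H)=\sigma(G)|_{B_G(c,r)}$, $\delta(H)=\delta(G)|_{E(H)}$; $\mathcal{D}^r$ is the set of radius-$r$ disks. Renamings are bijections of $\mathcal{V}$ acting naturally on graphs and pointed graphs. A local rule of radius $r$ is $f:\mathcal{D}^r\to\mathcal{G}$ with: (1) for each renaming $R$ a renaming $R'$ with $f\circ R=R'\circ f$; (2) families of disks with empty intersection have images with empty intersection; (3) $|V(f(D))|$ uniformly bounded; (4)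 $f(G^r_u),f(G^r_v)$ consistent for all $G$ and $u,v\in V(G)$. A CGD is a map $F(G)=\bigcup_{v\in V(G)} f(G^r_v)$ for a local rule $f$. *)

(* Defs.v *)
From Stdlib Require Import List.

Set Implicit Arguments.

(* Sets and partial functions are predicates; partial functions are
   functional relations ("sets of pairs"). *)
Definition set (T : Type) := T -> Prop.

Definition countable_set (T : Type) (A : set T) : Prop :=
  exists f : T -> nat, forall x y, A x -> A y -> f x = f y -> x = y.

Definition uncountable_type (T : Type) : Prop := ~ countable_set (fun _ : T => True).

Definition finite_type (T : Type) : Prop := exists l : list T, forall x, In x l.

Section Graphs.
Variables (V S D P : Type).
(* V : vertex names, S : Sigma (vertex labels), D : Delta (edge labels), P : ports pi *)

Record graph := Graph {
  gV : set V;
  gE : set (set (V * P));             (* E(G), edges = 2-element subsets of V x pi *)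
  gs : set (V * S);
  gd : set (set (V * P) * D)
}.

Definition two_element (e : set (V * P)) : Prop :=
  exists a b, a <> b /\ forall x, e x <-> (x = a \/ x = b).

Definition functional (A B : Type) (R : set (A * B)) : Prop :=
  forall x y y', R (x, y) -> R (x, y') -> y = y'.

Definition is_graph (G : graph) : Prop :=
  countable_set (gV G) /\
  (forall e, gE G e -> two_element e /\ forall u p, e (u, p) -> gV G u) /\
  (forall e e', gE G e -> gE G e' -> e <> e' -> forall x, e x -> e' x -> False) /\
  (forall u a, gs G (u, a) -> gV G u) /\ functional (gs G) /\
  (forall e d, gd G (e, d) -> gE G e) /\ functional (gd G).

Definition subgraph (G H : graph) : Prop :=
  (forall u, gV G u -> gV H u) /\ (forall e, gE G e -> gE H e) /\
  (forall x, gs G x -> gs H x) /\ (forall x, gd G x -> gd H x).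

Definition empty_graph : graph :=
  Graph (fun _ => False) (fun _ => False) (fun _ => False) (fun _ => False).

Definition graph_eq (G H : graph) : Prop := subgraph G H /\ subgraph H G.

Definition union2 (G H : graph) : graph :=
  Graph (fun u => gV G u \/ gV H u) (fun e => gE G e \/ gE H e)
        (fun x => gs G x \/ gs H x) (fun x => gd G x \/ gd H x).

Definition consistent (G H : graph) : Prop :=
  (forall e e', (gE G e \/ gE H e) -> (gE G e' \/ gE H e') -> e <> e' ->
      forall x, e x -> e' x -> False) /\
  functional (gs (union2 G H)) /\ functional (gd (union2 G H)).

Definition bigunion (I : Type) (F : I -> graph) : graph :=
  Graph (fun u => exists i, gV (F i) u) (fun e => exists i, gE (F i) e)
        (fun x => exists i, gs (F i) x) (fun x => exists i, gd (F i) x).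

Definition bigintersection (I : Type) (F : I -> graph) : graph :=
  Graph (fun u => forall i, gV (F i) u) (fun e => forall i, gE (F i) e)
        (fun x => forall i, gs (F i) x) (fun x => forall i, gd (F i) x).

Definition adjacent (G : graph) (u v : V) : Prop :=
  exists e p q, gE G e /\ e (u, p) /\ e (v, q) /\ (u, p) <> (v, q).

Fixpoint ball (G : graph) (c : V) (n : nat) : set V :=
  match n with
  | O => fun v => v = c /\ gV G c
  | Datatypes.S m => fun v => ball G c m v \/ exists u, ball G c m u /\ adjacent G u v
  end.

Definition pgraph := (graph * V)%type.

Definition disk (G : graph) (r : nat) (c : V) : pgraph :=
  (Graph (ball G c (Datatypes.S r))
         (fun e => gE G e /\ exists u p, e (u, p) /\ ball G c r u)
         (fun x => gs G x /\ ball G c r (fst x))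
         (fun x => gd G x /\ gE G (fst x) /\ exists u p, fst x (u, p) /\ ball G c r u),
   c).

Definition is_disk (r : nat) (Dk : pgraph) : Prop :=
  exists G c, is_graph G /\ gV G c /\ Dk = disk G r c.

Definition bijection (R : V -> V) : Prop :=
  exists R', (forall x, R' (R x) = x) /\ (forall y, R (R' y) = y).

Definition rename (R : V -> V) (G : graph) : graph :=
  Graph (fun v => exists u, gV G u /\ v = R u)
        (fun e' => exists e, gE G e /\
            forall x, e' x <-> exists u p, e (u, p) /\ x = (R u, p))
        (fun x => exists u a, gs G (u, a) /\ x = (R u, a))
        (fun x => exists e d, gd G (e, d) /\ snd x = d /\
            forall y, fst x y <-> exists u p, e (u, p) /\ y = (R u, p)).

Definition rename_p (R : V -> V) (Dk : pgraph) : pgraph :=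
  (rename R (fst Dk), R (snd Dk)).

Definition local_rule (r : nat) (f : pgraph -> graph) : Prop :=
  (forall Dk, is_disk r Dk -> is_graph (f Dk)) /\
  (forall R, bijection R -> exists R', bijection R' /\
      forall Dk, is_disk r Dk -> f (rename_p R Dk) = rename R' (f Dk)) /\
  (forall (I : Type) (Ds : I -> pgraph), (forall i, is_disk r (Ds i)) ->
      graph_eq (bigintersection (fun i => fst (Ds i))) empty_graph ->
      graph_eq (bigintersection (fun i => f (Ds i))) empty_graph) /\
  (exists b : nat, forall Dk, is_disk r Dk ->
      exists l : list V, length l <= b /\ forall v, gV (f Dk) v -> In v l) /\
  (forall G u v, is_graph G -> gV G u -> gV G v ->
      consistent (f (disk G r u)) (f (disk G r v))).

Definition induced (r : nat) (f : pgraph -> graph) (G : graph) : graph :=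
  bigunion (fun w : {v : V | gV G v} => f (disk G r (proj1_sig w))).

Definition is_CGD (F : graph -> graph) : Prop :=
  exists r f, local_rule r f /\ forall G, is_graph G -> F G = induced r f G.

End Graphs.

(* Main.v *)
Require Import Defs.
From Stdlib Require Import List Classical FunctionalExtensionality PropExtensionality.

Definition frule {V : Type} (Dk : pgraph V unit unit unit) : graph V unit unit unit :=
  Graph (fun v => v = snd Dk) (fun _ => False)
        (fun x => fst x = snd Dk /\ ~ exists a, gs (fst Dk) (snd Dk, a))
        (fun _ => False).

Lemma disk_center {V : Type} (r : nat) (Dk : pgraph V unit unit unit) :
  is_disk r Dk -> gV (fst Dk) (snd Dk).
Proof.
  intros [G [c [HG [Hc ->]]]]. simpl. left.
  induction r; simpl; auto.
Qed.

Lemma frule_local {V : Type} : local_rule 0 (@frule V).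
Proof.
  split; [|split; [|split; [|split]]].
  - intros Dk _. unfold is_graph; simpl.
    split; [exists (fun _ => 0); intros x y -> -> _; reflexivity|].
    split; [tauto|]. split; [tauto|]. split; [intros u a [H _]; exact H|].
    split; [intros x [] [] _ _; reflexivity|]. split; [tauto|].
    intros x [] [] _ _; reflexivity.
  - intros R [R' [HR1 HR2]]. exists R. split; [exists R'; auto|].
    intros [G c] _. unfold rename_p, frule, rename; simpl.
    f_equal; apply functional_extensionality; intro x;
      apply propositional_extensionality; split.
    + intros ->. exists c; auto.
    + intros [u [-> ->]]; reflexivity.
    + tauto.
    + intros [e [[] _]].
    + intros [Hx Hn]. destruct x as [v a]. simpl in Hx. subst v.
      exists c, a. split; [|reflexivity]. split; [reflexivity|].
      intros [a' Ha']. apply Hn. exists a'. exists c, a'. auto.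
    + intros [u [a [[Hu Hn] ->]]]. simpl in Hu. subst u. simpl. split; [reflexivity|].
      intros [a' [u [a'' [Hg Heq]]]]. injection Heq; intros Ha Hr.
      assert (u = c) by (rewrite <- (HR1 u), <- Hr; auto). subst u a''.
      apply Hn; eauto.
    + tauto.
    + intros [e [d [[] _]]].
  - intros I Ds HD [Hsub _]. destruct Hsub as [HV [HE [HS HDd]]].
    split; [|split; simpl; tauto].
    split; [|split; [|split]]; simpl.
    + intros v Hv. apply (HV v). simpl. intros i. rewrite (Hv i). apply (disk_center _ _ (HD i)).
    + intros e He. apply (HE e). intros i. destruct (He i).
    + intros x Hx. apply (HV (fst x)). simpl. intros i. destruct (Hx i) as [-> _].
      apply (disk_center _ _ (HD i)).
    + intros x Hx. apply (HE (fun _ => False)). intros i. destruct (Hx i).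
  - exists 1. intros Dk _. exists (snd Dk :: nil). simpl. split; auto.
  - intros G u v _ _ _. unfold consistent; simpl. split; [tauto|].
    split; intros x [] [] _ _; try reflexivity; simpl in *; tauto.
Qed.

Theorem proposition2p11 :
  forall (V : Type), uncountable_type V ->
  exists (Sig Del P : Type), finite_type P /\
  exists F : graph V Sig Del P -> graph V Sig Del P,
    is_CGD F /\
    exists G H : graph V Sig Del P,
      is_graph G /\ is_graph H /\ subgraph G H /\ ~ subgraph (F G) (F H).
Proof.
  intros V HV.
  assert (Hin : exists v : V, True).
  { apply NNPP. intro Hn. apply HV. exists (fun _ => 0). intros x. exfalso. apply Hn. now exists x. }
  destruct Hin as [v0 _].
  exists unit, unit, unit. split; [exists (tt :: nil); intros []; simpl; auto|].
  exists (induced 0 (@frule V)). split; [exists 0, (@frule V); split; [apply frule_local|reflexivity]|].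
  exists (Graph (fun v => v = v0) (fun _ => False) (fun _ => False) (fun _ => False)).
  exists (Graph (fun v => v = v0) (fun _ => False) (fun x => fst x = v0) (fun _ => False)).
  split; [|split; [|split]].
  - unfold is_graph; simpl.
    split; [exists (fun _ => 0); intros x y -> -> _; reflexivity|]. unfold functional; simpl; tauto.
  - unfold is_graph; simpl.
    split; [exists (fun _ => 0); intros x y -> -> _; reflexivity|].
    split; [tauto|]. split; [tauto|]. split; [intros u a H; exact H|].
    split; [intros x [] [] _ _; reflexivity|]. split; [tauto|].
    intros x [] [] _ _; reflexivity.
  - unfold subgraph; simpl; tauto.
  - intros [_ [_ [HS _]]].
    assert (Hx : gs (induced 0 (@frule V)
        (Graph (fun v => v = v0) (fun _ => False) (fun _ => False) (fun _ => False))) (v0, tt)).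
    { simpl. exists (exist (fun v => v = v0) v0 eq_refl). simpl. split; [reflexivity|].
      intros [a [[] _]]. }
    destruct (HS _ Hx) as [[w Hw] Hw']. simpl in Hw, Hw'. subst w.
    destruct Hw' as [_ Hn]. apply Hn. exists tt. simpl. split; [reflexivity|].
    simpl; auto.
Qed.
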